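(* For any value $\gamma \in (0,1]$, the set function $\mathbf{S} \mapsto G(\mathbf{S},\gamma)$, defined on sub-multisets $\mathbf{S}\subseteq\mathbf{W}$ by $$G(\mathbf{S},\gamma) = \sum_{f\in\mathbf{F}}\sum_{t\in\mathrm{dom}(\mathbf{W},f)} d(t)\cdot\log\left(\frac{m_{\mathbf{S}}(t,f)+\gamma}{\gamma}\right),$$ is non-negative, monotone and submodular.
   Context: A workload $\mathbf{W}$ is a finite multiset of queries; $\mathbf{S}\subseteq\mathbf{W}$ ranges over sub-multisets. There is a finite set $\mathbf{F}$ of features; for each query $q$ and feature $f$, $f(q)$ is a finite multiset of tokens; $f(\mathbf{S}) = \biguplus_{q\in\mathbf{S}} f(q)$, $\mathrm{dom}(\mathbf{W},f)$ is the set of distinct tokens in $f(\mathbf{W})$, and $m_{\mathbf{S}}(t,f)$ is the multiplicity of token $t$ in $f(\mathbf{S})$. $d$ is a target probability distribution on the tokens $\{(f,t): t\in\mathrm{dom}(\mathbf{W},f)\}$. Monotone: $A\subseteq B\Rightarrow G(A)\le G(B)$; submodular: $G(A\cup\{q\})-G(A)\ge G(B\cup\{q\})-G(B)$ for $A\subseteq B$. *)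

(* Defs.v *)
From HB Require Import structures.
From mathcomp Require Import all_boot all_order all_algebra.
From mathcomp Require Import reals exp.
Set Implicit Arguments. Unset Strict Implicit. Unset Printing Implicit Defensive.
Import Order.TTheory GRing.Theory Num.Theory.
Local Open Scope ring_scope.

(* Finite multisets are represented by sequences, up to permutation;
   A is a sub-multiset of B iff every element occurs at most as often in A as in B. *)
Definition submset (T : eqType) (A B : seq T) : Prop :=
  forall x, (count_mem x A <= count_mem x B)%N.

Section Workload.
Variables (Q Tok : eqType) (F : finType) (feat : F -> Q -> seq Tok).

Definition featS (f : F) (S : seq Q) : seq Tok := flatten [seq feat f q | q <- S].

Definition dom (W : seq Q) (f : F) : seq Tok := undup (featS f W).

Definition mult (S : seq Q) (t : Tok) (f : F) : nat := count_mem t (featS f S).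

Definition is_token_distribution (R : realType) (W : seq Q) (d : F -> Tok -> R) : Prop :=
  (forall f t, t \in dom W f -> 0 <= d f t) /\
  \sum_(f : F) \sum_(t <- dom W f) d f t = 1.

Definition G (R : realType) (W : seq Q) (d : F -> Tok -> R) (S : seq Q) (gamma : R) : R :=
  \sum_(f : F) \sum_(t <- dom W f) d f t * ln (((mult S t f)%:R + gamma) / gamma).

End Workload.

(* Main.v *)
Require Import Defs.
From HB Require Import structures.
From mathcomp Require Import all_boot all_order all_algebra.
From mathcomp Require Import reals exp.
From mathcomp Require Import lra zify.
Import Order.TTheory GRing.Theory Num.Theory.
Local Open Scope ring_scope.

Lemma key_ineq (R : realType) (a b c : R) (g : R) : 0 < g -> 0 <= a <= b -> 0 <= c ->
  ln ((c + b + g) / g) - ln ((b + g) / g) <= ln ((c + a + g) / g) - ln ((a + g)/ g).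
Proof.
move=> g0 /andP[a0 ab] c0.
have P x : 0 <= x -> 0 < x + g by move=> ?; lra.
have Pc x : 0 <= x -> 0 < c + x + g by move=> ?; lra.
rewrite !ln_div ?posrE ?P ?Pc //; last by lra.
rewrite !opprB !addrA !subrK -!ln_div ?posrE ?P ?Pc //.
rewrite ler_ln ?posrE ?divr_gt0 ?P ?Pc //.
rewrite ler_pdivrMr ?P //. rewrite mulrC mulrA ler_pdivlMr ?P //. nra. all: lra.
Qed.

Lemma multE (Q Tok : eqType) (F : finType) (feat : F -> Q -> seq Tok) S t f :
  mult feat S t f = (\sum_(q <- S) count_mem t (feat f q))%N.
Proof. rewrite /mult /featS count_flatten -map_comp sumnE big_map. done. Qed.

Lemma multC (Q Tok : eqType) (F : finType) (feat : F -> Q -> seq Tok) q S t f :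
  mult feat (q :: S) t f = (count_mem t (feat f q) + mult feat S t f)%N.
Proof. by rewrite /mult /featS /= count_cat. Qed.

Lemma sum_sub (Q : eqType) (c : Q -> nat) (A B : seq Q) : submset A B ->
  (\sum_(q <- A) c q <= \sum_(q <- B) c q)%N.
Proof.
elim: A B => [|a A IH] B H; first by rewrite big_nil.
have aB : a \in B.
  have := H a; rewrite /= eqxx.
  apply: contraLR => /count_memPn ->; by [].
rewrite (perm_big _ (perm_to_rem aB)) !big_cons leq_add2l; apply: IH => x.
rewrite count_mem_rem; have := H x => /=.
by case: (a == x) => /=; lia.
Qed.

Lemma mult_mono (Q Tok : eqType) (F : finType) (feat : F -> Q -> seq Tok) A B t f :
  submset A B -> (mult feat A t f <= mult feat B t f)%N.
Proof. by move=> H; rewrite !multE; apply: sum_sub. Qed.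

Theorem proposition5p1 (R : realType) (Q Tok : eqType) (F : finType)
    (feat : F -> Q -> seq Tok) (W : seq Q) (d : F -> Tok -> R) (gamma : R) :
  is_token_distribution feat W d ->
  0 < gamma <= 1 ->
  (* non-negative *)
  (forall S, submset S W -> 0 <= G feat W d S gamma) /\
  (* monotone *)
  (forall A B, submset A B -> submset B W ->
     G feat W d A gamma <= G feat W d B gamma) /\
  (* submodular: adding one (more) occurrence of a query q of W *)
  (forall A B q, submset A B -> submset (q :: B) W ->
     G feat W d (q :: B) gamma - G feat W d B gamma
       <= G feat W d (q :: A) gamma - G feat W d A gamma).
Proof.
move=> [hd _] /andP[g0 _].
split; [|split].
- move=> S _; apply: sumr_ge0 => f _; rewrite big_seq; apply: sumr_ge0 => t tin.
  apply: mulr_ge0; first exact: hd.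
  apply: ln_ge0; rewrite ler_pdivlMr // mul1r lerDr; exact: ler0n.
- move=> A B AB _; apply: ler_sum => f _; rewrite !big_seq; apply: ler_sum => t tin.
  apply: ler_wpM2l; first exact: hd.
  have P (x : nat) : 0 < (x%:R + gamma) / gamma.
    by apply: divr_gt0 => //; apply: ltr_wpDl.
  rewrite ler_ln ?posrE ?P // ler_pM2r ?invr_gt0 // lerD2r ler_nat.
  exact: mult_mono.
- move=> A B q AB _; rewrite /G -!sumrB; apply: ler_sum => f _.
  rewrite -!sumrB !big_seq; apply: ler_sum => t tin.
  rewrite -!mulrBr; apply: ler_wpM2l; first exact: hd.
  rewrite !multC !natrD; apply: key_ineq => //.
  by rewrite ler0n ler_nat; apply: mult_mono.
Qed.
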